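(* In the setting below ($\bar{\mathbf Q}=\mathbf Q+\mathbf\Delta$), the matrices $\mathbf Q$ and $\mathbf\Delta$ are uniquely determined by $\bar{\mathbf Q}$. More precisely: for every $i\in[d]$ and $m$-subset $\mathcal I\subseteq[d]$ with $i>\max\mathcal I$, $i\notin\mathcal B$ and $\mathcal I\cap\mathcal B=\varnothing$, $$\mathbf Q_{i,\mathcal I}=(-1)^{\sigma_Q(i)+m}\sum_{t\in\mathcal I}(-1)^{\sigma_Q(t)+\mathrm{ind}_{\mathcal I}(t)}\,\bar{\mathbf Q}_{t,(\mathcal I\cup\{i\})\setminus\{t\}},$$ and $\mathbf\Delta_{i,\mathcal I}=\bar{\mathbf Q}_{i,\mathcal I}-\mathbf Q_{i,\mathcal I}$; for all other positions $(i,\mathcal I)$, $\mathbf\Delta_{i,\mathcal I}=0$ and $\mathbf Q_{i,\mathcal I}=\bar{\mathbf Q}_{i,\mathcal I}$.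
   Context: Notation: $[d]=\{1,\dots,d\}$; $\mathrm{ind}_{\mathcal I}(x)=|\{y\in\mathcal I:y\le x\}|$; $\max\varnothing=-\infty$. Setting: $\mathbb F$ a field, $d\ge1$, $j\ge1$, $\mathcal B\subseteq[d]$ with $|\mathcal B|\le j-1$, $m=j-|\mathcal B|-1$, $x\in[d]$, $\sigma_P\in\mathbb Z^d$, $\mathbf P$ an arbitrary matrix over $\mathbb F$ with rows $[d]$ and columns the $j$-subsets of $[d]$, $\sigma_Q(i)=1+\sigma_P(i)+\mathrm{ind}_{\mathcal B\cup\{i\}}(i)$. $\mathbf Q$ is a $(d;m)$ signed determinant message matrix with signature $\sigma_Q$: choose $v_{x,\mathcal X}\in\mathbb F$ for every $m$-subset $\mathcal X\subseteq[d]$, $x\in\mathcal X$, and $w_{y,\mathcal Y}\in\mathbb F$ for every $(m+1)$-subset $\mathcal Y\subseteq[d]$, $y\in\mathcal Y$, with $\sum_{y\in\mathcal Y}(-1)^{\mathrm{ind}_{\mathcal Y}(y)}w_{y,\mathcal Y}=0$; then $\mathbf Q_{x,\mathcal I}=(-1)^{\sigma_Q(x)}v_{x,\mathcal I}$ if $x\in\mathcal I$ and $(-1)^{\sigma_Q(x)}w_{x,\mathcal I\cup\{x\}}$ if $x\notin\mathcal I$, rows $x\in[d]$, columns $m$-subsets $\mathcal I$ (for $m=0$, the all-zero column indexed by $\varnothing$). $\mathbf\Delta$: rows $i\in[d]$, columns $m$-subsets $\mathcal I$, $\mathbf\Delta_{i,\mathcal I}=(-1)^{1+\sigma_P(i)+\mathrm{ind}_{\mathcal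 I\cup\{i\}\cup\mathcal B}(i)}\mathbf P_{x,\mathcal I\cup\{i\}\cup\mathcal B}$ if $i>\max\mathcal I$, $i\notin\mathcal B$, $\mathcal I\cap\mathcal B=\varnothing$, and $0$ otherwise. *)

(* Defs.v *)
(* [d] = {1..d} is modelled by 'I_d (values 0..d-1, same order). *)
From HB Require Import structures.
From mathcomp Require Import all_boot all_order all_algebra.
Set Implicit Arguments. Unset Strict Implicit. Unset Printing Implicit Defensive.
Import Order.TTheory GRing.Theory Num.Theory.
Local Open Scope ring_scope.

Definition sgnz (F : fieldType) (z : int) : F := (-1) ^ z.

Definition ind d (I : {set 'I_d}) (x : 'I_d) : nat :=
  #|[set y in I | (val y <= val x)%N]|.

Definition gt_max d (i : 'I_d) (I : {set 'I_d}) : bool :=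
  [forall y in I, (val y < val i)%N].

(* A matrix with rows [d] and columns indexed by subsets of [d]
   (only columns of the relevant cardinality are meaningful). *)
Definition setmx (F : fieldType) d := 'I_d -> {set 'I_d} -> F.

Definition signed_det_msg_mx (F : fieldType) d (m : nat) (sigma : 'I_d -> int)
    (Q : setmx F d) : Prop :=
  exists (v w : 'I_d -> {set 'I_d} -> F),
    (forall Y : {set 'I_d}, #|Y| = m.+1 ->
       \sum_(y in Y) sgnz F (ind Y y) * w y Y = 0) /\
    (forall (x : 'I_d) (I : {set 'I_d}), #|I| = m ->
       Q x I = sgnz F (sigma x) * (if x \in I then v x I else w x (x |: I))).

Definition sigmaQ d (B : {set 'I_d}) (sigmaP : 'I_d -> int) (i : 'I_d) : int :=
  1 + sigmaP i + (ind (B :|: [set i]) i)%:Z.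

Definition delta_pos d (B : {set 'I_d}) (i : 'I_d) (I : {set 'I_d}) : bool :=
  [&& gt_max i I, i \notin B & [disjoint I & B]].

Definition Delta (F : fieldType) d (B : {set 'I_d}) (x : 'I_d)
    (sigmaP : 'I_d -> int) (P : setmx F d) : setmx F d :=
  fun i I =>
    if delta_pos B i I then
      sgnz F (1 + sigmaP i + (ind (I :|: [set i] :|: B) i)%:Z)
        * P x (I :|: [set i] :|: B)
    else 0.

(* Main.v *)
Require Import Defs.
From HB Require Import structures.
From mathcomp Require Import all_boot all_order all_algebra.
From mathcomp Require Import ring.
Import Order.TTheory GRing.Theory Num.Theory.
Local Open Scope ring_scope.


Lemma sgnzD (F : fieldType) a b : sgnz F (a + b) = sgnz F a * sgnz F b.
Proof. by rewrite /sgnz expfzDr // oppr_eq0 oner_eq0. Qed.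

Lemma sgnz_pm (F : fieldType) a : sgnz F a = 1 \/ sgnz F a = -1.
Proof.
rewrite /sgnz; case: a => n.
- change ((-1 : F) ^+ n = 1 \/ (-1 : F) ^+ n = -1).
  rewrite -signr_odd; case: (odd n); [right|left]; by rewrite ?expr1 ?expr0.
- change (((-1 : F) ^+ n.+1)^-1 = 1 \/ ((-1 : F) ^+ n.+1)^-1 = -1).
  rewrite -signr_odd; case: (odd _); [right|left];
  by rewrite ?expr1 ?expr0 ?invrN1 ?invr1.
Qed.

Lemma sgnz_sq (F : fieldType) a : sgnz F a * sgnz F a = 1.
Proof. by case: (sgnz_pm F a) => ->; rewrite ?mulr1 ?mulrNN ?mulr1. Qed.
Theorem lemma2 (F : fieldType) (d j : nat) (B : {set 'I_d}) (x : 'I_d)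
    (sigmaP : 'I_d -> int) (P : 'I_d -> {set 'I_d} -> F)
    (Q : 'I_d -> {set 'I_d} -> F) :
  (1 <= d)%N -> (1 <= j)%N -> (#|B| <= j - 1)%N ->
  let m := (j - #|B| - 1)%N in
  signed_det_msg_mx m (sigmaQ B sigmaP) Q ->
  let Qbar := fun i I => Q i I + Delta B x sigmaP P i I in
  forall (i : 'I_d) (I : {set 'I_d}), #|I| = m ->
    (delta_pos B i I ->
       Q i I = sgnz F (sigmaQ B sigmaP i + m%:Z) *
         \sum_(t in I) sgnz F (sigmaQ B sigmaP t + (ind I t)%:Z)
                         * Qbar t ((I :|: [set i]) :\ t)
       /\ Delta B x sigmaP P i I = Qbar i I - Q i I) /\
    (~~ delta_pos B i I ->
       Delta B x sigmaP P i I = 0 /\ Q i I = Qbar i I).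
Proof.
move=> _ _ _ m [v [w [hw hQ]]] Qbar i I hI.
split; last first.
  move=> /negbTE nd; by rewrite /Qbar /Delta nd addr0.
move=> dp; split; last by rewrite /Qbar /= addrAC subrr add0r.
have /and3P [gm iB dis] := dp.
have ltI : forall t, t \in I -> (val t < val i)%N by move=> t tI; exact: (implyP (forallP gm t) tI).
have iI : i \notin I by apply/negP => /ltI; rewrite ltnn.
set Y := i |: I.
have eY : I :|: [set i] = Y by rewrite setUC.
have cY : #|Y| = m.+1 by rewrite cardsU1 iI hI.
have Qi : Q i I = sgnz F (sigmaQ B sigmaP i) * w i Y by rewrite hQ // (negbTE iI).
have indIY : forall t, t \in I -> ind Y t = ind I t.
  move=> t tI; rewrite /ind; apply: eq_card => y; rewrite !inE.
  case: (y =P i) => [->|_] //=; by rewrite (negbTE iI) leqNgt ltI.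
have indYi : ind Y i = m.+1.
  rewrite /ind -cY; apply: eq_card => z; rewrite !inE.
  case: (z =P i) => [->|_] //=; first by rewrite leqnn.
  case yI: (z \in I) => //=; exact: ltnW (ltI _ yI).
have term : forall t, t \in I ->
   sgnz F (sigmaQ B sigmaP t + (ind I t)%:Z) * Qbar t ((I :|: [set i]) :\ t)
   = sgnz F (ind Y t) * w t Y.
  move=> t tI; rewrite eY.
  have tY : t \in Y by rewrite /Y in_setU1 tI orbT.
  have dz : Delta B x sigmaP P t (Y :\ t) = 0.
    rewrite /Delta; case: ifP => // /and3P [g _ _].
    have iY : i \in Y :\ t.
      rewrite !inE eqxx andbT; apply/eqP => it; by rewrite it tI in iI.
    have h := implyP (forallP g i) iY.
    by have := ltI _ tI; rewrite ltnNge (ltnW h).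
  rewrite /Qbar dz addr0 hQ; last first.
    by have := cardsD1 t Y; rewrite tY cY add1n => -[->].
  rewrite setD11 setD1K // indIY // sgnzD mulrA -[X in X * w t Y]mulrA.
  by rewrite [_ * sgnz F (sigmaQ _ _ t)]mulrC mulrA sgnz_sq mul1r.
rewrite (eq_bigr _ term) Qi.
have := hw Y cY; rewrite (big_setU1 _ iI) /= indYi.
rewrite (eq_bigr (fun t => sgnz F (ind Y t) * w t Y)) // => hs.
have -> : \sum_(t in I) sgnz F (ind Y t) * w t Y = - (sgnz F (m.+1 : nat) * w i Y).
  by apply/eqP; rewrite -subr_eq0 opprK addrC hs.
rewrite -addn1 PoszD sgnzD !sgnzD.
have -> : sgnz F 1 = -1 by rewrite /sgnz expr1z.
have -> : forall (a b c s ww : F), a * b * c * s * - (s * (-1) * ww) = a*b*c*(s*s)*ww by move=> *; ring.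
by rewrite sgnz_sq mulr1.
Qed.
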